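(* If $M\in\overline{ARI}$ is circ-neutral, then $Ad_{\overline{ari}}(invpil)\cdot M$ is also circ-neutral.
   Context: $\overline{ARI}$: moulds $M=(M^r)_{r\ge0}$, $M^r\in\mathbb{Q}(v_1,\dots,v_r)$, $M^0=0$; $M$ is circ-neutral if $\sum_{i=0}^{r-1}M(v_{i+1},\dots,v_r,v_1,\dots,v_i)=0$ for all $r>1$. Bracket: $mu(A,B)(\mathbf v)=\sum_{i=0}^rA(v_1,\dots,v_i)B(v_{i+1},\dots,v_r)$, $lu(A,B)=mu(A,B)-mu(B,A)$, $(\overline{amit}(B)A)(\mathbf v)=\sum_{0\le i<j<r}A(v_1,\dots,v_i,v_{j+1},\dots,v_r)B(v_{i+1}-v_{j+1},\dots,v_j-v_{j+1})$, $(\overline{anit}(B)A)(\mathbf v)=\sum_{1\le i<j\le r}A(v_1,\dots,v_i,v_{j+1},\dots,v_r)B(v_{i+1}-v_i,\dots,v_j-v_i)$, $\overline{arit}=\overline{amit}-\overline{anit}$, $\overline{ari}(A,B)=\overline{arit}(B)A-\overline{arit}(A)B+lu(A,B)$. Let $f(x)=1-e^{-x}$ and define $c_r\in\mathbb{Q}$ by $f_*(x)=\sum_{r\ge1}c_rx^{r+1}$, where $f_*$ is the infinitesimal generator of $f$, i.e. $f(x)=\exp(f_*(x)\frac{d}{dx})\cdot x$. Let $lopil\in\overline{ARI}$ be $lopil(v_1,\dots,v_r)=c_r\frac{v_1+\dots+v_r}{v_1(v_1-v_2)\cdots(v_{r-1}-v_r)v_r}$. Then $Ad_{\overline{ari}}(invpil)=\exp(ad_{\overline{ari}}(-lopil))$,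 i.e. $Ad_{\overline{ari}}(invpil)\cdot M=\sum_{k\ge0}\frac{1}{k!}ad_{\overline{ari}}(-lopil)^k(M)$ with $ad_{\overline{ari}}(P)(Q)=\overline{ari}(P,Q)$. *)

(* Defs.v *)
From HB Require Import structures.
From mathcomp Require Import all_boot all_order all_algebra.
From mathcomp Require Import fraction.
From mathcomp Require Import mpoly.
Set Implicit Arguments. Unset Strict Implicit. Unset Printing Implicit Defensive.
Import Order.TTheory GRing.Theory Num.Theory.
Local Open Scope ring_scope.

Notation "x %:F" := (@FracField.tofrac _ x).

(* Polynomials in r variables v_1..v_r over Q; variable v_(k+1) is [var r k]. *)
Definition Pol (r : nat) := {mpoly rat[r]}.
Definition RF (r : nat) := {fraction Pol r}.

Definition var (r k : nat) : Pol r :=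
  if @insub nat (fun k => k < r)%N 'I_r k is Some i then 'X_i else 0.

(* Computed on a
   representative numerator/denominator pair; all substitutions used below
   are injective on polynomials, so this is independent of the representative. *)
Definition fsubst (n r : nat) (t : n.-tuple (Pol r)) (x : RF n) : RF r :=
  (comp_mpoly t (\n_(repr x)))%:F / (comp_mpoly t (\d_(repr x)))%:F.

Definition mould := forall r : nat, RF r.

Definition mould_add (A B : mould) : mould := fun r => A r + B r.
Definition mould_opp (A : mould) : mould := fun r => - A r.

Definition in_ARI (M : mould) : Prop := M 0%N = 0.

Definition circ_neutral (M : mould) : Prop :=
  forall r : nat, (1 < r)%N ->
    \sum_(i < r) fsubst [tuple var r ((k + i) %% r) | k < r] (M r) = 0.

Definition mu (A B : mould) : mould := fun r =>
  \sum_(i < r.+1)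
     fsubst [tuple var r k | k < i] (A i)
   * fsubst [tuple var r (i + k) | k < r - i] (B (r - i)%N).

Definition lu (A B : mould) : mould := mould_add (mu A B) (mould_opp (mu B A)).

(* A(v_1,..,v_i,v_{j+1},..,v_r) *)
Definition outer_tuple (r i j : nat) : (i + (r - j)).-tuple (Pol r) :=
  [tuple (if (k < i)%N then var r k else var r (k - i + j)) | k < i + (r - j)].

Definition amit (B A : mould) : mould := fun r =>
  \sum_(j < r) \sum_(i < j)
     fsubst (outer_tuple r i j) (A (i + (r - j))%N)
   * fsubst [tuple var r (i + k) - var r j | k < j - i] (B (j - i)%N).

Definition anit (B A : mould) : mould := fun r =>
  \sum_(j < r.+1) \sum_(1 <= i < j)
     fsubst (outer_tuple r i j) (A (i + (r - j))%N)
   * fsubst [tuple var r (i + k) - var r (i - 1) | k < j - i] (B (j - i)%N).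

Definition arit (B A : mould) : mould := mould_add (amit B A) (mould_opp (anit B A)).

Definition ari (A B : mould) : mould :=
  mould_add (mould_add (arit B A) (mould_opp (arit A B))) (lu A B).

(* The series f(x) = 1 - e^{-x} = sum_{n>=1} (-1)^(n+1) x^n / n! *)
Definition f_coef (n : nat) : rat :=
  if n is 0%N then 0 else (-1) ^+ n.+1 / (n`!)%:R.

Definition fstar_trunc (c : nat -> rat) (N : nat) : {poly rat} :=
  \sum_(1 <= r < N) c r *: 'X^(r.+1).
Definition fstar_der (c : nat -> rat) (N : nat) (p : {poly rat}) : {poly rat} :=
  fstar_trunc c N * p^`().

(* c is the coefficient sequence of the infinitesimal generator f_* of f:
   f(x) = exp(f_*(x) d/dx) . x  as formal power series.  Coefficient n of
   exp(f_* d/dx).x only involves c_1..c_(n-1) and the terms k < n of the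
   exponential series, so comparing coefficients n < N on truncations is exact. *)
Definition is_infgen_coef (c : nat -> rat) : Prop :=
  forall N n : nat, (n < N)%N ->
    (\sum_(k < N) (k`!%:R)^-1 *: iter k (fstar_der c N) 'X)`_n = f_coef n.

Definition lopil (c : nat -> rat) : mould := fun r =>
  if r is 0%N then 0 else
  ((c r)%:MP * \sum_(k < r) var r k)%:F /
  (var r 0 * (\prod_(k < r.-1) (var r k - var r k.+1)) * var r r.-1)%:F.

(* In depth r only
   the terms k <= r can be nonzero (ad_ari(P) raises the minimal depth by at
   least one when P^0 = 0, and M^0 = 0), so the depth-r component is a finite sum. *)
Definition Ad_invpil (c : nat -> rat) (M : mould) : mould := fun r =>
  \sum_(k < r.+1) (k`!%:R : RF r)^-1 * iter k (ari (mould_opp (lopil c))) M r.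

(* Main.v *)
Require Import Defs.
From HB Require Import structures.
From mathcomp Require Import all_boot all_order all_algebra fraction mpoly zify.
From mathcomp Require Import ring.
Import Order.TTheory GRing.Theory Num.Theory.
Set Implicit Arguments. Unset Strict Implicit. Unset Printing Implicit Defensive.
Local Open Scope ring_scope.


Lemma frac_repr (R : idomainType) (x : {fraction R}) :
  x = (\n_(repr x))%:F / (\d_(repr x))%:F.
Proof.
have hd : (\d_(repr x))%:F != 0 :> {fraction R} by rewrite tofrac_eq0 denom_ratioP.
apply: (canRL (mulfK hd)).
rewrite -{1}[x]reprK.
set y := repr x.
unlock tofrac.
rewrite -[_ * _]/(FracField.mul _ _) -FracField.pi_mul.
apply/eqmodP; rewrite /= FracField.equivfE /FracField.mulf !numden_Ratio ?oner_neq0 ?mulf_neq0 ?denom_ratioP //.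
all: by rewrite ?oner_neq0 // !mulr1 mulrC.
Qed.

Lemma repr_den_neq0 (R : idomainType) (x : {fraction R}) : \d_(repr x) != 0.
Proof. exact: denom_ratioP. Qed.

Lemma comp_mpolyA (n k l : nat) (t : k.-tuple {mpoly rat[l]}) (u : n.-tuple {mpoly rat[k]})
  (p : {mpoly rat[n]}) :
  comp_mpoly t (comp_mpoly u p) = comp_mpoly [tuple comp_mpoly t (tnth u i) | i < n] p.
Proof.
rewrite (comp_mpolyE p u) (comp_mpolyE p) raddf_sum /=; apply: eq_bigr => m _.
rewrite linearZ /= rmorph_prod /=; congr (_ *: _); apply: eq_bigr => i _.
by rewrite rmorphXn tnth_mktuple.
Qed.

Section FS.
Variables n r : nat.
Implicit Types (t : n.-tuple (Pol r)) (x y : RF n).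

Definition good t := forall p : Pol n, comp_mpoly t p = 0 -> p = 0.

Lemma good_neq0 t p : good t -> p != 0 -> comp_mpoly t p != 0.
Proof. by move=> g; apply: contra => /eqP /g ->. Qed.

Lemma fsubst_frac t (a b : Pol n) : good t -> b != 0 ->
  fsubst t (a%:F / b%:F) = (comp_mpoly t a)%:F / (comp_mpoly t b)%:F.
Proof.
move=> g b0; rewrite /fsubst.
set x := a%:F / b%:F.
have := frac_repr x; set a' := \n_(repr x); set b' := \d_(repr x) => e.
have b'0 : b' != 0 by exact: repr_den_neq0.
have : a%:F / b%:F = a'%:F / b'%:F :> RF n by rewrite -e.
move/eqP; rewrite eqr_div ?tofrac_eq0 // -!tofracM tofrac_eq => /eqP e2.
apply/eqP; rewrite eqr_div ?tofrac_eq0 ?good_neq0 // -!tofracM tofrac_eq.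
by rewrite -!rmorphM /= -e2.
Qed.

Lemma frac_ex x : exists a b : Pol n, b != 0 /\ x = a%:F / b%:F.
Proof. exists (\n_(repr x)), (\d_(repr x)); split; [exact: repr_den_neq0 | exact: frac_repr]. Qed.

Lemma fsubst0 t : fsubst t 0 = 0.
Proof.
rewrite /fsubst.
have := frac_repr (0 : RF n); set a := \n_(repr _); set b := \d_(repr _) => e.
have b0 : b != 0 by exact: repr_den_neq0.
have : a%:F == 0 :> RF n.
  by move/eqP: e; rewrite eq_sym mulf_eq0 invr_eq0 [(b%:F == 0)]tofrac_eq0 (negbTE b0) orbF.
by rewrite tofrac_eq0 => /eqP ->; rewrite rmorph0 /= rmorph0 mul0r.
Qed.

Lemma fsubstD t x y : good t -> fsubst t (x + y) = fsubst t x + fsubst t y.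
Proof.
move=> g; have [a [b [b0 ->]]] := frac_ex x; have [c [d [d0 ->]]] := frac_ex y.
have tb0 := good_neq0 g b0; have td0 := good_neq0 g d0.
rewrite addf_div ?tofrac_eq0 // -!tofracM -tofracD (fsubst_frac _ g (mulf_neq0 b0 d0)).
rewrite (fsubst_frac _ g b0) (fsubst_frac _ g d0) addf_div ?tofrac_eq0 // -!tofracM -tofracD.
by rewrite rmorphD /= !rmorphM.
Qed.

Lemma fsubstM t x y : good t -> fsubst t (x * y) = fsubst t x * fsubst t y.
Proof.
move=> g; have [a [b [b0 ->]]] := frac_ex x; have [c [d [d0 ->]]] := frac_ex y.
have tb0 := good_neq0 g b0; have td0 := good_neq0 g d0.
rewrite mulf_div -!tofracM (fsubst_frac _ g (mulf_neq0 b0 d0)) (fsubst_frac _ g b0) (fsubst_frac _ g d0).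
by rewrite mulf_div -!tofracM !rmorphM.
Qed.

Lemma fsubstN t x : good t -> fsubst t (- x) = - fsubst t x.
Proof.
move=> g; apply/eqP; rewrite -subr_eq0 opprK -fsubstD // addNr fsubst0 //.
Qed.

Lemma fsubstB t x y : good t -> fsubst t (x - y) = fsubst t x - fsubst t y.
Proof. by move=> g; rewrite fsubstD // fsubstN. Qed.

Lemma fsubst_sum t I (s : seq I) (P : pred I) (F : I -> RF n) : good t ->
  fsubst t (\sum_(i <- s | P i) F i) = \sum_(i <- s | P i) fsubst t (F i).
Proof.
move=> g; elim/big_rec2: _ => [|i a b _ <-]; first exact: fsubst0.
by rewrite fsubstD.
Qed.

Lemma fsubstV t x : good t -> fsubst t x^-1 = (fsubst t x)^-1.
Proof.
move=> g; have [a [b [b0 ->]]] := frac_ex x.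
have [->|a0] := eqVneq a 0; first by rewrite rmorph0 mul0r invr0 fsubst0 invr0.
by rewrite invf_div !fsubst_frac // invf_div.
Qed.

Lemma fsubst_nat t k : good t -> fsubst t k%:R = k%:R.
Proof.
move=> g; have -> : (k%:R : RF n) = (k%:R : Pol n)%:F / (1 : Pol n)%:F.
  by rewrite rmorph_nat rmorph1 divr1.
by rewrite fsubst_frac ?oner_neq0 // !rmorph_nat rmorph1 divr1.
Qed.

End FS.

Lemma fsubst_comp n k r (t : k.-tuple (Pol r)) (u : n.-tuple (Pol k)) (x : RF n) :
  good t -> good u ->
  fsubst t (fsubst u x) = fsubst [tuple comp_mpoly t (tnth u i) | i < n] x.
Proof.
move=> gt gu; rewrite [fsubst u x]/fsubst fsubst_frac ?good_neq0 ?repr_den_neq0 //.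
by rewrite !comp_mpolyA.
Qed.

Lemma good_linv n r (t : n.-tuple (Pol r)) (s : r.-tuple (Pol n)) :
  (forall i : 'I_n, comp_mpoly s (tnth t i) = 'X_i) -> good t.
Proof.
move=> h p e.
have := comp_mpoly_id p.
rewrite -(eq_mktuple _ h) -comp_mpolyA e rmorph0 => <- //.
Qed.


Lemma var_ord r a (h : (a < r)%N) : var r a = 'X_(Ordinal h).
Proof. by rewrite /var insubT. Qed.

Lemma var_out r a : (r <= a)%N -> var r a = 0.
Proof. by move=> h; rewrite /var insubF // ltnNge h. Qed.

Lemma comp_var k r (h : nat -> {mpoly rat[k]}) a : (a < r)%N ->
  comp_mpoly [tuple h b | b < r] (var r a) = h a.
Proof. by move=> ha; rewrite (var_ord ha) comp_mpolyXU -tnth_nth tnth_mktuple. Qed.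

Definition linvf N (g : nat -> nat) (a : nat) : Pol N :=
  if [pick u : 'I_N | g u == a] is Some u then 'X_u else 0.
Definition linv N r (g : nat -> nat) : r.-tuple (Pol N) :=
  [tuple linvf N g a | a < r].

Lemma linv_var N r (g : nat -> nat) (i : 'I_N) :
  (forall u, (u < N)%N -> (g u < r)%N) ->
  (forall u v, (u < N)%N -> (v < N)%N -> g u = g v -> u = v) ->
  comp_mpoly (linv N r g) (var r (g i)) = 'X_i.
Proof.
move=> hr hi; rewrite comp_var ?hr // /linvf.
case: pickP => [u /eqP hu | /(_ i)]; last by rewrite eqxx.
have -> // : u = i by apply: ord_inj; apply: hi.
Qed.

Lemma linv_out N r (g : nat -> nat) e :
  (forall u, (u < N)%N -> g u != e) -> comp_mpoly (linv N r g) (var r e) = 0.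
Proof.
move=> he; have [er|re] := ltnP e r; last by rewrite var_out // rmorph0.
rewrite comp_var // /linvf; case: pickP => [u /eqP hu|//].
by have := he u (ltn_ord u); rewrite hu eqxx.
Qed.

Lemma good_vars N r (g : nat -> nat) :
  (forall u, (u < N)%N -> (g u < r)%N) ->
  (forall u v, (u < N)%N -> (v < N)%N -> g u = g v -> u = v) ->
  good [tuple var r (g u) | u < N].
Proof.
move=> hr hi; apply: (@good_linv _ _ _ (linv N r g)) => i.
by rewrite tnth_mktuple linv_var.
Qed.

Lemma good_diff N r (g : nat -> nat) e :
  (forall u, (u < N)%N -> (g u < r)%N) ->
  (forall u v, (u < N)%N -> (v < N)%N -> g u = g v -> u = v) ->
  (forall u, (u < N)%N -> g u != e) ->
  good [tuple var r (g u) - var r e | u < N].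
Proof.
move=> hr hi he; apply: (@good_linv _ _ _ (linv N r g)) => i.
by rewrite tnth_mktuple rmorphB /= linv_var // linv_out // subr0.
Qed.

Lemma big_reidx (T : Type) (idx : T) (op : Monoid.com_law idx) N (h : nat -> nat) (F : nat -> T) :
  (forall k, (k < N)%N -> (h k < N)%N) ->
  (forall u v, (u < N)%N -> (v < N)%N -> h u = h v -> u = v) ->
  \big[op/idx]_(k < N) F (h k) = \big[op/idx]_(k < N) F k.
Proof.
move=> hN hi.
pose h' (k : 'I_N) : 'I_N := Ordinal (hN k (ltn_ord k)).
have inj : injective h' by move=> u v /(congr1 val) /= /hi; move=> /(_ (ltn_ord u) (ltn_ord v)) /val_inj.
by rewrite [RHS](reindex_inj inj).
Qed.

Lemma big_rot (T : Type) (idx : T) (op : Monoid.com_law idx) N (i : nat) (F : nat -> T) :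
  (0 < N)%N -> \big[op/idx]_(k < N) F ((k + i) %% N)%N = \big[op/idx]_(k < N) F k.
Proof.
move=> N0; apply: (@big_reidx T idx op N (fun k => (k + i) %% N)%N F) => [k _|u v uN vN]; first by rewrite ltn_pmod.
by move/eqP; rewrite eqn_modDr !modn_small // => /eqP.
Qed.

Lemma sum_reidx (V : zmodType) N (h : nat -> nat) (F : nat -> V) :
  (forall k, (k < N)%N -> (h k < N)%N) ->
  (forall u v, (u < N)%N -> (v < N)%N -> h u = h v -> u = v) ->
  \sum_(k < N) F (h k) = \sum_(k < N) F k.
Proof.
move=> hN hi.
pose h' (k : 'I_N) : 'I_N := Ordinal (hN k (ltn_ord k)).
have inj : injective h' by move=> u v /(congr1 val) /= /hi; move=> /(_ (ltn_ord u) (ltn_ord v)) /val_inj.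
by rewrite [RHS](reindex_inj inj).
Qed.

Lemma prod_reidx (V : comRingType) N (h : nat -> nat) (F : nat -> V) :
  (forall k, (k < N)%N -> (h k < N)%N) ->
  (forall u v, (u < N)%N -> (v < N)%N -> h u = h v -> u = v) ->
  \prod_(k < N) F (h k) = \prod_(k < N) F k.
Proof.
move=> hN hi.
pose h' (k : 'I_N) : 'I_N := Ordinal (hN k (ltn_ord k)).
have inj : injective h' by move=> u v /(congr1 val) /= /hi; move=> /(_ (ltn_ord u) (ltn_ord v)) /val_inj.
by rewrite [RHS](reindex_inj inj).
Qed.

Lemma sum_rot (V : zmodType) N (i : nat) (F : nat -> V) :
  (0 < N)%N -> \sum_(k < N) F ((k + i) %% N)%N = \sum_(k < N) F k.
Proof.
move=> N0; apply: (@sum_reidx V N (fun k => (k + i) %% N)%N F) => [k _|u v uN vN]; first by rewrite ltn_pmod.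
by move/eqP; rewrite eqn_modDr !modn_small // => /eqP.
Qed.

Lemma prod_rot (V : comRingType) N (i : nat) (F : nat -> V) :
  (0 < N)%N -> \prod_(k < N) F ((k + i) %% N)%N = \prod_(k < N) F k.
Proof.
move=> N0; apply: (@prod_reidx V N (fun k => (k + i) %% N)%N F) => [k _|u v uN vN]; first by rewrite ltn_pmod.
by move/eqP; rewrite eqn_modDr !modn_small // => /eqP.
Qed.


Lemma tri_amit (V : zmodType) r (F : nat -> nat -> V) :
  \sum_(j < r) \sum_(i < j) F i j = \sum_(1 <= m < r) \sum_(i < r - m) F i (i + m)%N.
Proof.
elim: r => [|r IH]; first by rewrite big_ord0 big_geq.
rewrite big_ord_recr /= IH.
case: r IH => [|r] IH.
  by rewrite big_ord0 addr0 !big_geq.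
rewrite (@big_nat_recr _ _ _ r.+1) //= subSnn big_ord1 add0n.
rewrite [in RHS](@eq_big_nat _ _ _ 1 r.+1 _ (fun m => \sum_(i < r.+1 - m) F i (i + m)%N + F (r.+1 - m)%N r.+1)); last first.
  move=> m /andP [m1 mr]; rewrite subSn ?(ltnW mr) // big_ord_recr /=.
  by rewrite subnK // ltnW.
rewrite big_split /= -!addrA; congr (_ + _).
rewrite big_ord_recl addrC /=; congr (_ + _).
rewrite big_add1 /= big_mkord.
rewrite -(@big_reidx _ _ _ r (fun k => r - k.+1)%N (fun k => F k.+1 r.+1)); last 2 first.
- by move=> k kr; rewrite subnSK // leq_subr.
- by move=> u v ur vr; lia.
by apply: eq_bigr => i _; rewrite -subSn // subSS.
Qed.

Lemma tri_anit (V : zmodType) r (F : nat -> nat -> V) :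
  \sum_(j < r.+1) \sum_(1 <= i < j) F i j =
  \sum_(1 <= m < r) \sum_(1 <= i < (r - m).+1) F i (i + m)%N.
Proof.
rewrite big_ord_recl big_geq // add0r.
under eq_bigr => j _ do rewrite big_add1 /= big_mkord.
rewrite /= (@tri_amit _ r (fun i j => F i.+1 j.+1)).
apply: eq_big_nat => m /andP [m1 mr].
by rewrite big_add1 /= big_mkord.
Qed.


Definition rotT r k : r.-tuple (Pol r) := [tuple var r ((a + k) %% r)%N | a < r].

Lemma good_rot r k : good (rotT r k).
Proof.
apply: (@good_vars r r (fun a => (a + k) %% r)%N) => [u ur|u v ur vr].
  by rewrite ltn_pmod // (leq_ltn_trans _ ur).
by move/eqP; rewrite eqn_modDr !modn_small // => /eqP.
Qed.

Lemma comp_rot r k a : (a < r)%N -> comp_mpoly (rotT r k) (var r a) = var r ((a + k) %% r).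
Proof. by move=> ar; rewrite /rotT (comp_var (fun a => var r ((a + k) %% r))). Qed.

Lemma modn_shift n i u : (i <= n)%N -> (u < n)%N ->
  ((u + (n - i) %% n) %% n = if (u < i)%N then u + (n - i) else u - i)%N.
Proof.
move=> hi un; rewrite modnDmr; case: ifP => ui.
  by rewrite modn_small //; lia.
rewrite (_ : u + (n - i) = (u - i) + n)%N; last by lia.
by rewrite modnDr modn_small //; lia.
Qed.

Lemma modn_addr a b r : ((a + b * r) %% r = a %% r)%N.
Proof. by rewrite addnC modnMDl. Qed.

Lemma modn_eqE a b c r : (a = b + c * r)%N -> (a %% r = b %% r)%N.
Proof. by move=> ->; rewrite modn_addr. Qed.

Definition PhiA (A : mould) r m b q : RF r :=
  fsubst [tuple var r ((b + m + (u + q) %% (r - m)) %% r) | u < r - m] (A (r - m)%N).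
Definition PhiB (B : mould) r m e b : RF r :=
  fsubst [tuple var r ((b + u) %% r) - var r ((b + e) %% r) | u < m] (B m).

Lemma PhiA_sum (A : mould) r m b :
  (r - m <= r)%N -> (1 < r - m)%N ->
  \sum_(q < r - m) fsubst [tuple var (r - m) ((k + q) %% (r - m)) | k < r - m] (A (r - m)%N) = 0 ->
  \sum_(q < r - m) PhiA A r m b q = 0.
Proof.
set n := (r - m)%N => nr n1 h.
pose C := [tuple var r ((b + m + w) %% r) | w < n].
have gC : good C.
  apply: (@good_vars n r (fun w => (b + m + w) %% r)%N) => [u un|u v un vn].
    by rewrite ltn_pmod //; lia.
  by move/eqP; rewrite eqn_modDl !modn_small ?(leq_trans _ nr) // => /eqP.
transitivity (fsubst C (\sum_(q < n) fsubst [tuple var n ((k + q) %% n) | k < n] (A n))).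
  rewrite fsubst_sum //; apply: eq_bigr => q _.
  rewrite (@fsubst_comp _ _ _ C _ _ gC (@good_rot n q)) /PhiA; congr fsubst.
  apply: eq_mktuple => u; rewrite tnth_mktuple.
  rewrite (comp_var (fun w => var r ((b + m + w) %% r))) ?ltn_pmod //.
  lia.
have -> : \sum_(q < n) fsubst [tuple var n ((k + q) %% n)%N | k < n] (A n) = 0 by exact: h.
by rewrite fsubst0.
Qed.

Lemma rotA (A : mould) r m i k : (1 <= m)%N -> (m < r)%N -> (i <= r - m)%N ->
  fsubst (rotT r k) (fsubst (outer_tuple r i (i + m)) (A (i + (r - (i + m))))%N) =
  PhiA A r m ((k + i) %% r) ((r - m - i) %% (r - m)).
Proof.
move=> m1 mr ir; rewrite /outer_tuple.
rewrite (_ : i + (r - (i + m)) = r - m)%N; last by lia.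
pose og u := (if u < i then u else u - i + (i + m))%N.
rewrite (_ : [tuple _ | _ < r - m] = [tuple var r (og k0) | k0 < r - m]); last first.
  by apply: eq_mktuple => u; rewrite /og; case: ifP.
have hog : forall u, (u < r - m)%N -> (og u < r)%N by move=> u ur; rewrite /og; case: ifP; lia.
rewrite fsubst_comp; last 2 first.
- exact: good_rot.
- apply: (@good_vars (r - m) r og) => // u v ur vr; rewrite /og.
  by case: ifP; case: ifP; lia.
rewrite /PhiA; congr fsubst; apply: eq_mktuple => u; rewrite tnth_mktuple comp_rot ?hog //.
rewrite modn_shift ?ltn_ord //.
have uo := ltn_ord u.
rewrite /og; case: ifP => ui.
  rewrite -addnA modnDml (_ : k + i + _ = u + k + 1 * r)%N ?modn_addr //; lia.
congr (var r _); rewrite -[in RHS]addnA modnDml; congr (_ %% r)%N; lia.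
Qed.

Lemma rotB1 (B : mould) r m i k : (i + m < r)%N ->
  fsubst (rotT r k) (fsubst [tuple var r (i + u) - var r (i + m) | u < i + m - i] (B (i + m - i)%N)) =
  PhiB B r m m ((k + i) %% r).
Proof.
move=> imr; rewrite addKn.
rewrite fsubst_comp; last 2 first.
- exact: good_rot.
- apply: (@good_diff m r (fun u => i + u)%N (i + m)%N) => [u um|u v _ _|u um]; lia.
rewrite /PhiB; congr fsubst; apply: eq_mktuple => u; have uo := ltn_ord u; rewrite tnth_mktuple rmorphB /=.
rewrite !comp_rot; try lia.
by rewrite !modnDml; congr (var r (_ %% r)%N - var r (_ %% r)%N); lia.
Qed.

Lemma rotB2 (B : mould) r m i k : (1 <= i)%N -> (i + m <= r)%N -> (0 < r)%N ->
  fsubst (rotT r k) (fsubst [tuple var r (i + u) - var r (i - 1) | u < i + m - i] (B (i + m - i)%N)) =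
  PhiB B r m r.-1 ((k + i) %% r).
Proof.
move=> i1 imr r0; rewrite addKn.
rewrite fsubst_comp; last 2 first.
- exact: good_rot.
- apply: (@good_diff m r (fun u => i + u)%N (i - 1)%N) => [u um|u v _ _|u um]; lia.
rewrite /PhiB; congr fsubst; apply: eq_mktuple => u; have uo := ltn_ord u; rewrite tnth_mktuple rmorphB /=.
rewrite !comp_rot; try lia.
rewrite !modnDml; congr (var r _ - var r _); first by congr (_ %% r)%N; lia.
by rewrite (_ : k + i + r.-1 = i - 1 + k + 1 * r)%N ?modn_addr //; lia.
Qed.

Section Arit.
Variables (A B : mould) (r : nat).
Hypothesis r1 : (1 < r)%N.

Definition F1 i j := fsubst (outer_tuple r i j) (A (i + (r - j))%N) *
  fsubst [tuple var r (i + k) - var r j | k < j - i] (B (j - i)%N).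
Definition F2 i j := fsubst (outer_tuple r i j) (A (i + (r - j))%N) *
  fsubst [tuple var r (i + k) - var r (i - 1) | k < j - i] (B (j - i)%N).

Definition XA m b := \sum_(q < r - m) PhiA A r m b q.

Lemma sum_reflect (F : nat -> RF r) n :
  \sum_(i < n) F ((n - i) %% n)%N = \sum_(q < n) F q.
Proof.
apply: (@sum_reidx _ n (fun i => (n - i) %% n)%N F) => [k kn|u v un vn].
  by rewrite ltn_pmod //; lia.
case: u un => [|u] un; case: v vn => [|v] vn //.
- by rewrite subn0 modnn modn_small //; lia.
- by rewrite subn0 modnn modn_small //; lia.
- by rewrite !modn_small //; lia.
Qed.

Lemma amit_rot : \sum_(k < r) fsubst (rotT r k) (amit B A r) =
  \sum_(1 <= m < r) \sum_(b < r) XA m b * PhiB B r m m b.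
Proof.
rewrite /amit (@tri_amit _ r F1).
transitivity (\sum_(k < r) \sum_(1 <= m < r) \sum_(i < r - m) fsubst (rotT r k) (F1 i (i + m))).
  apply: eq_bigr => k _; rewrite fsubst_sum; last exact: good_rot.
  apply: eq_bigr => m _; rewrite fsubst_sum //; exact: good_rot.
rewrite exchange_big /=; apply: eq_big_nat => m /andP [m1 mr].
rewrite exchange_big /=.
transitivity (\sum_(i < r - m) \sum_(b < r) PhiA A r m b ((r - m - i) %% (r - m)) * PhiB B r m m b).
  apply: eq_bigr => i _.
  transitivity (\sum_(k < r) (fun b => PhiA A r m b ((r - m - i) %% (r - m)) * PhiB B r m m b) ((k + i) %% r)%N); last first.
    by apply: (@sum_rot _ r i (fun b => PhiA A r m b ((r - m - i) %% (r - m)) * PhiB B r m m b)); lia.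
  apply: eq_bigr => k _.
  have io := ltn_ord i.
  rewrite /F1 fsubstM; last exact: good_rot.
  by rewrite rotA ?rotB1 //; lia.
rewrite exchange_big /=; apply: eq_bigr => b _.
by rewrite /XA mulr_suml (@sum_reflect (fun q => PhiA A r m b q * PhiB B r m m b)).
Qed.

Lemma sum_reflect2 (F : nat -> RF r) n :
  \sum_(i < n) F ((n - i.+1) %% n)%N = \sum_(q < n) F q.
Proof.
apply: (@sum_reidx _ n (fun i => (n - i.+1) %% n)%N F) => [k kn|u v un vn].
  by rewrite ltn_pmod //; lia.
by rewrite !modn_small //; lia.
Qed.

Lemma anit_rot : \sum_(k < r) fsubst (rotT r k) (anit B A r) =
  \sum_(1 <= m < r) \sum_(b < r) XA m b * PhiB B r m r.-1 b.
Proof.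
rewrite /anit (@tri_anit _ r F2).
transitivity (\sum_(k < r) \sum_(1 <= m < r) \sum_(1 <= i < (r - m).+1) fsubst (rotT r k) (F2 i (i + m))).
  apply: eq_bigr => k _; rewrite fsubst_sum; last exact: good_rot.
  apply: eq_bigr => m _; rewrite fsubst_sum //; exact: good_rot.
rewrite exchange_big /=; apply: eq_big_nat => m /andP [m1 mr].
rewrite exchange_big /= big_add1 /= big_mkord.
transitivity (\sum_(i < r - m) \sum_(b < r) PhiA A r m b ((r - m - i.+1) %% (r - m)) * PhiB B r m r.-1 b).
  apply: eq_bigr => i _.
  transitivity (\sum_(k < r) (fun b => PhiA A r m b ((r - m - i.+1) %% (r - m)) * PhiB B r m r.-1 b) ((k + i.+1) %% r)%N); last first.
    by apply: (@sum_rot _ r i.+1 (fun b => PhiA A r m b ((r - m - i.+1) %% (r - m)) * PhiB B r m r.-1 b)); lia.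
  apply: eq_bigr => k _.
  have io := ltn_ord i.
  rewrite /F2 fsubstM; last exact: good_rot.
  by rewrite rotA ?rotB2 //; lia.
rewrite exchange_big /=; apply: eq_bigr => b _.
by rewrite /XA mulr_suml (@sum_reflect2 (fun q => PhiA A r m b q * PhiB B r m r.-1 b)).
Qed.

End Arit.

Lemma arit_circ (A B : mould) r : (1 < r)%N ->
  (forall n, (1 < n)%N -> (n < r)%N ->
     \sum_(q < n) fsubst [tuple var n ((k + q) %% n) | k < n] (A n) = 0) ->
  \sum_(k < r) fsubst (rotT r k) (arit B A r) = 0.
Proof.
move=> r1 hA; rewrite /arit /mould_add /mould_opp.
under eq_bigr => k _ do rewrite (fsubstB _ _ (@good_rot r k)).
rewrite sumrB (amit_rot _ _ r1) (anit_rot _ _ r1) -sumrB.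
apply: big1_seq => m /andP [_]; rewrite mem_index_iota => /andP [m1 mr].
rewrite -sumrB; apply: big1 => b _.
have [->|mne] := eqVneq m r.-1; first by rewrite subrr.
rewrite /XA PhiA_sum ?mul0r ?subrr //; try lia.
apply: hA; lia.
Qed.

Definition Gm (P Q : mould) r i k : RF r :=
  fsubst [tuple var r ((u + k) %% r) | u < i] (P i) *
  fsubst [tuple var r ((i + u + k) %% r) | u < r - i] (Q (r - i)%N).

Lemma mu_rot (P Q : mould) r k :
  fsubst (rotT r k) (mu P Q r) = \sum_(i < r.+1) Gm P Q r i k.
Proof.
rewrite /mu fsubst_sum; last exact: good_rot.
apply: eq_bigr => i _; have io := ltn_ord i.
rewrite fsubstM; last exact: good_rot.
rewrite !fsubst_comp; last 4 first.
- exact: good_rot.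
- by apply: (@good_vars (r - i) r (fun u => i + u)%N); lia.
- exact: good_rot.
- by apply: (@good_vars i r (fun u => u)%N); lia.
rewrite /Gm; congr (_ * _); congr fsubst; apply: eq_mktuple => u; have uo := ltn_ord u;
  rewrite tnth_mktuple comp_rot //; lia.
Qed.

Lemma lu_circ (P Q : mould) r : \sum_(k < r) fsubst (rotT r k) (lu P Q r) = 0.
Proof.
rewrite /lu /mould_add /mould_opp.
under eq_bigr => k _ do rewrite (fsubstB _ _ (@good_rot r k)) !mu_rot.
rewrite sumrB; apply/eqP; rewrite subr_eq0; apply/eqP.
rewrite exchange_big [RHS]exchange_big /=.
rewrite -[RHS](@sum_reidx _ r.+1 (fun i => r - i)%N (fun i => \sum_(k < r) Gm Q P r i k)); last 2 first.
- by move=> k kr; lia.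
- by move=> u v ur vr; lia.
apply: eq_bigr => i _; have io := ltn_ord i.
have r0 : (0 < r)%N \/ r = 0%N by lia.
case: r0 => [r0|r0]; last by subst r; rewrite !big_ord0.
rewrite -(@sum_rot _ r (r - i) (fun k => Gm P Q r i k)) //.
apply: eq_bigr => k _; rewrite /Gm mulrC.
rewrite (subKn (_ : i <= r)%N); last by lia.
congr (_ * _); congr fsubst; apply: eq_mktuple => u; have uo := ltn_ord u.
- by rewrite modnDmr; congr (var r _); apply: (@modn_eqE _ _ 1); lia.
- by rewrite modnDmr; congr (var r (_ %% r)%N); lia.
Qed.


Lemma circE (M : mould) : circ_neutral M <->
  forall r, (1 < r)%N -> \sum_(k < r) fsubst (rotT r k) (M r) = 0.
Proof. by []. Qed.

Lemma ari_circ (P Q : mould) : circ_neutral P -> circ_neutral Q -> circ_neutral (ari P Q).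
Proof.
move=> hP hQ r r1; rewrite /ari /mould_add /mould_opp.
under eq_bigr => k _ do rewrite (fsubstD _ _ (@good_rot r k)) (fsubstB _ _ (@good_rot r k)).
rewrite big_split sumrB /= lu_circ addr0.
rewrite arit_circ // ?arit_circ ?subrr // => n n1 nr.
- exact: hQ.
- exact: hP.
Qed.


Lemma var_neq0 r a : (a < r)%N -> var r a != 0.
Proof.
move=> ar; rewrite (var_ord ar); apply/eqP => /(congr1 (meval (fun _ => (1 : rat)))).
by rewrite mevalXU meval0 => /eqP; rewrite oner_eq0.
Qed.

Lemma var_sub_neq0 r a b : (a < r)%N -> (b < r)%N -> a != b -> var r a - var r b != 0.
Proof.
move=> ar br ab; rewrite (var_ord ar) (var_ord br); apply/eqP.
move/(congr1 (meval (fun i : 'I_r => (i : nat)%:R : rat))).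
rewrite mevalB !mevalXU meval0 /= => /eqP; rewrite subr_eq0 eqr_nat.
by rewrite (negbTE ab).
Qed.

Lemma inv_aux (K : fieldType) (a b D : K) : a != 0 -> b != 0 -> D != 0 -> b - a != 0 ->
  (a * b * D / (b - a))^-1 = (a^-1 - b^-1) / D.
Proof. by move=> ha hb hD hd; field; rewrite ha hb hD hd. Qed.

Section Lop.
Variable r : nat.
Hypothesis r1 : (1 < r)%N.

Definition X a : RF r := (var r (a %% r))%:F.
Definition fX a := X a - X a.+1.
Definition DX := \prod_(a < r) fX a.

Lemma r0 : (0 < r)%N. Proof. lia. Qed.

Lemma XE a : X (a %% r) = X a.
Proof. by rewrite /X modn_mod. Qed.

Lemma X_neq0 a : X a != 0.
Proof. by rewrite /X tofrac_eq0 var_neq0 // ltn_pmod // r0. Qed.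

Lemma X_sub_neq0 a b : (a %% r != b %% r)%N -> X a - X b != 0.
Proof.
move=> h; rewrite /X -tofracB tofrac_eq0; by apply: var_sub_neq0 => //; rewrite ltn_pmod // r0.
Qed.

Lemma fX_neq0 a : fX a != 0.
Proof.
apply: X_sub_neq0; rewrite -[a.+1]addn1 -modnDml.
have := ltn_pmod a r0; set b := (a %% r)%N => br.
have [e|ne] := eqVneq (b + 1)%N r.
  by rewrite e modnn; lia.
by rewrite modn_small; lia.
Qed.

Lemma fXE a : fX (a %% r) = fX a.
Proof. by rewrite /fX XE; congr (_ - _); rewrite /X -[(a %% r).+1]addn1 modnDml addn1. Qed.

Lemma DX_neq0 : DX != 0.
Proof. by apply/prodf_neq0 => a _; exact: fX_neq0. Qed.

Lemma den_rot k :
  X k * (\prod_(a < r.-1) (X (a + k) - X (a.+1 + k))) * X (r.-1 + k) * (X (r.-1 + k) - X k)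
  = X k * X (r.-1 + k) * DX.
Proof.
have e1 : \prod_(a < r.-1) (X (a + k) - X (a.+1 + k)) * (X (r.-1 + k) - X k) = DX.
  have -> : X (r.-1 + k) - X k = fX (r.-1 + k).
    rewrite /fX -[X k]XE -[X (r.-1 + k).+1]XE; congr (_ - X _).
    by rewrite -addSn prednK ?r0 // modnDl.
  rewrite (_ : \prod_(a < r.-1) (X (a + k) - X (a.+1 + k)) = \prod_(a < r.-1) fX (a + k)) //.
  rewrite -(@big_ord_recr _ _ _ r.-1 (fun a => fX (a + k))) prednK ?r0 //.
  rewrite -/DX /DX -(@prod_rot _ r k fX) ?r0 //; apply: eq_bigr => a _.
  by rewrite fXE.
by rewrite -e1 -!mulrA; congr (_ * _); rewrite mulrCA.
Qed.

Lemma inv_den k :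
  (X k * (\prod_(a < r.-1) (X (a + k) - X (a.+1 + k))) * X (r.-1 + k))^-1
  = ((X k)^-1 - (X (r.-1 + k))^-1) / DX.
Proof.
have hk : (k %% r != (r.-1 + k) %% r)%N.
  rewrite -modnDmr; have := ltn_pmod k r0; set b := (k %% r)%N => br.
  have [e|ne] := ltnP (r.-1 + b) r.
    by rewrite modn_small //; lia.
  rewrite (_ : r.-1 + b = (b - 1) + r)%N ?modnDr ?modn_small; lia.
have d0 : X (r.-1 + k) - X k != 0 by apply: X_sub_neq0; rewrite eq_sym.
have := den_rot k => e.
have hden : X k * (\prod_(a < r.-1) (X (a + k) - X (a.+1 + k))) * X (r.-1 + k) =
   X k * X (r.-1 + k) * DX / (X (r.-1 + k) - X k) by rewrite -e mulfK.
rewrite hden.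
have := X_neq0 k; have := X_neq0 (r.-1 + k); have := DX_neq0 => h1 h2 h3.
by rewrite (inv_aux h3 h2 h1 d0).
Qed.

End Lop.


Lemma lopil_circ c : circ_neutral (lopil c).
Proof.
move=> r r1; rewrite -/(rotT r _).
have r0 : (0 < r)%N by lia.
case: r r1 r0 => [//|r'] r1 r0.
rewrite /lopil; move: r'.+1 r1 r0 => r r1 r0.
set num := ((c r)%:MP * \sum_(k < r) var r k).
set den := (var r 0 * _ * var r r.-1).
have den0 : den != 0.
  rewrite /den !mulf_neq0 ?var_neq0 //.
  apply/prodf_neq0 => a _; have ao := ltn_ord a; apply: var_sub_neq0; try lia.
  lia.
under eq_bigr => k _ do rewrite (fsubst_frac _ (@good_rot r k) den0).
have hnum : forall k, comp_mpoly (rotT r k) num = num.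
  move=> k; rewrite /num rmorphM /= comp_mpolyC rmorph_sum /=; congr (_ * _).
  rewrite -[RHS](@sum_rot _ r k (fun a => var r a)) //; apply: eq_bigr => a _.
  by rewrite comp_rot.
have hden : forall k, (comp_mpoly (rotT r k) den)%:F =
    X r k * (\prod_(a < r.-1) (X r (a + k) - X r (a.+1 + k))) * X r (r.-1 + k).
  move=> k; rewrite /den !rmorphM /= !comp_rot //; last by lia.
  rewrite !rmorph_prod /=; congr (_ * _ * _).
  apply: eq_bigr => a _; have ao := ltn_ord a.
  by rewrite !rmorphB /= !comp_rot //; lia.
under eq_bigr => k _ do rewrite hnum hden (inv_den r1).
rewrite -mulr_sumr; apply/eqP; rewrite mulf_eq0; apply/orP; right.
rewrite -mulr_suml mulf_eq0; apply/orP; left.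
rewrite sumrB subr_eq0; apply/eqP.
rewrite -(@sum_rot _ r r.-1 (fun a => (X r a)^-1)) //.
by apply: eq_bigr => k _; rewrite XE addnC.
Qed.


Lemma opp_circ (P : mould) : circ_neutral P -> circ_neutral (mould_opp P).
Proof.
move=> hP r r1; rewrite /mould_opp.
under eq_bigr => k _ do rewrite (fsubstN _ (@good_rot r k)).
by rewrite sumrN (hP r r1) oppr0.
Qed.

Unset Implicit Arguments.
Theorem proposition32 (c : nat -> rat) (Hc : is_infgen_coef c) (M : mould) :
  in_ARI M -> circ_neutral M -> circ_neutral (Ad_invpil c M).
Proof.
move=> _ hM.
have hL := opp_circ (lopil_circ c).
have hI : forall k, circ_neutral (iter k (ari (mould_opp (lopil c))) M).
  by elim=> [|k IH] //=; apply: ari_circ.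
move=> r r1; rewrite /Ad_invpil.
under eq_bigr => i _ do rewrite (fsubst_sum _ _ _ (@good_rot r i)).
rewrite exchange_big /=; apply: big1 => k _.
under eq_bigr => i _ do rewrite (fsubstM _ _ (@good_rot r i)) (fsubstV _ (@good_rot r i)) (fsubst_nat _ (@good_rot r i)).
by rewrite -mulr_sumr (hI k r r1) mulr0.
Qed.
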